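(* If a first-order theory $T$ is positively model-complete, then every homomorphism between models of $T$ is elementary.
   Context: A homomorphism of $\mathscr L$-structures preserves atomic sentences with parameters; it is elementary if it preserves (and reflects) all first-order sentences with parameters. A homomorphism $f:A\to B$ is an immersion if for every positive existential (coherent) sentence $\phi(\bar a)$ with parameters in $A$ — a prenex existential formula containing no negation — $B\models\phi(f\bar a)$ implies $A\models\phi(\bar a)$. $T$ is positively model-complete if every homomorphism between models of $T$ is an immersion. *)

(* Defs.v *)
From Stdlib Require Import Fin.

Set Implicit Arguments.

Record language := {
  fsym : Type;
  fari : fsym -> nat;
  rsym : Type;
  rari : rsym -> nat
}.

Inductive term (L : language) : Type :=
| tvar : nat -> term L
| tapp : forall f : fsym L, (Fin.t (fari L f) -> term L) -> term L.

Inductive formula (L : language) : Type :=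
| fEq  : term L -> term L -> formula L
| fRel : forall r : rsym L, (Fin.t (rari L r) -> term L) -> formula L
| fTrue : formula L
| fFalse : formula L
| fNot : formula L -> formula L
| fAnd : formula L -> formula L -> formula L
| fOr  : formula L -> formula L -> formula L
| fImp : formula L -> formula L -> formula L
| fEx  : nat -> formula L -> formula L
| fAll : nat -> formula L -> formula L.

Arguments tvar {L}.
Arguments fTrue {L}.
Arguments fFalse {L}.

Fixpoint term_var L (x : nat) (t : term L) : Prop :=
  match t with
  | tvar y => x = y
  | tapp f ts => exists i, term_var x (ts i)
  end.

Fixpoint free L (x : nat) (phi : formula L) : Prop :=
  match phi with
  | fEq t u => term_var x t \/ term_var x u
  | fRel r ts => exists i, term_var x (ts i)
  | fTrue | fFalse => False
  | fNot p => free x p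
  | fAnd p q | fOr p q | fImp p q => free x p \/ free x q
  | fEx y p | fAll y p => x <> y /\ free x p
  end.

Definition sentence L (phi : formula L) : Prop := forall x, ~ free x phi.

Record structure (L : language) := {
  dom :> Type;
  dom_inh : inhabited dom;
  interp_f : forall f : fsym L, (Fin.t (fari L f) -> dom) -> dom;
  interp_r : forall r : rsym L, (Fin.t (rari L r) -> dom) -> Prop
}.

Definition upd (M : Type) (v : nat -> M) (x : nat) (a : M) : nat -> M :=
  fun y => if PeanoNat.Nat.eqb y x then a else v y.

Fixpoint eval L (M : structure L) (v : nat -> M) (t : term L) : M :=
  match t with
  | tvar x => v x
  | tapp f ts => interp_f M f (fun i => eval M v (ts i))
  end.

(** Satisfaction under an assignment (assignments = parameters). *)
Fixpoint sat L (M : structure L) (v : nat -> M) (phi : formula L) : Prop :=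
  match phi with
  | fEq t u => eval M v t = eval M v u
  | fRel r ts => interp_r M r (fun i => eval M v (ts i))
  | fTrue => True
  | fFalse => False
  | fNot p => ~ sat M v p
  | fAnd p q => sat M v p /\ sat M v q
  | fOr p q => sat M v p \/ sat M v q
  | fImp p q => sat M v p -> sat M v q
  | fEx x p => exists a : M, sat M (upd v x a) p
  | fAll x p => forall a : M, sat M (upd v x a) p
  end.

Definition theory (L : language) := formula L -> Prop.

Definition is_model L (T : theory L) (M : structure L) : Prop :=
  forall phi, T phi -> forall v : nat -> M, sat M v phi.

Definition homomorphism {L} {A B : structure L} (h : A -> B) : Prop :=
  (forall f (args : Fin.t (fari L f) -> A),
      h (interp_f A f args) = interp_f B f (fun i => h (args i))) /\
  (forall r (args : Fin.t (rari L r) -> A),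
      interp_r A r args -> interp_r B r (fun i => h (args i))).

Definition elementary {L} {A B : structure L} (h : A -> B) : Prop :=
  forall (phi : formula L) (v : nat -> A),
    sat A v phi <-> sat B (fun x => h (v x)) phi.

Fixpoint pos_qf L (phi : formula L) : Prop :=
  match phi with
  | fEq _ _ | fRel _ _ | fTrue | fFalse => True
  | fAnd p q | fOr p q => pos_qf p /\ pos_qf q
  | _ => False
  end.

Fixpoint pos_ex L (phi : formula L) : Prop :=
  match phi with
  | fEx _ p => pos_ex p
  | p => pos_qf p
  end.

Definition immersion {L} {A B : structure L} (h : A -> B) : Prop :=
  forall (phi : formula L) (v : nat -> A), pos_ex phi ->
    sat B (fun x => h (v x)) phi -> sat A v phi.

Definition pos_model_complete L (T : theory L) : Prop :=
  forall (A B : structure L) (h : A -> B),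
    is_model T A -> is_model T B -> homomorphism h -> immersion h.

(* Main.v *)
Require Import Defs.
From Stdlib Require Import Fin Arith Lia ClassicalEpsilon FunctionalExtensionality PropExtensionality ProofIrrelevance Classical.
From mathcomp Require all_boot all_classical.

Module UF.
Import all_boot all_classical.
Lemma ultra_exists (T : Type) (F : (T -> Prop) -> Prop) :
  F (fun _ => True) ->
  (forall X Y, F X -> F Y -> F (fun t => X t /\ Y t)) ->
  (forall X Y : T -> Prop, (forall t, X t -> Y t) -> F X -> F Y) ->
  (forall X, F X -> exists t, X t) ->
  exists U : (T -> Prop) -> Prop,
    (forall X, F X -> U X) /\
    (forall X Y, U X -> U Y -> U (fun t => X t /\ Y t)) /\
    (forall X Y : T -> Prop, (forall t, X t -> Y t) -> U X -> U Y) /\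
    (forall X, U X -> exists t, X t) /\
    (forall X, U X \/ U (fun t => ~ X t)).
Proof.
move=> FT FI FS Fex.
have FF : ProperFilter F.
  apply: Build_ProperFilter_ex; first by move=> X /Fex.
  split.
  - by have -> : setT = (fun _ : T => True) by [].
  - by move=> X Y FX FY; apply: FI.
  - by move=> X Y XY; apply: FS.
have [G [UG FG]] := ultraFilterLemma FF.
exists G; split; first exact: FG.
split; first by move=> X Y GX GY; exact: (filterI GX GY).
split; first by move=> X Y XY GX; exact: (filterS XY GX).
split; first by move=> X /filter_ex.
by move=> X; exact: (in_ultra_setVsetC X UG).
Qed.

End UF.


Section Basics.
Context {L : language}.

Lemma sat_ext (M : structure L) (v v' : nat -> M) phi :
  (forall x, v x = v' x) -> (sat M v phi <-> sat M v' phi).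
Proof. intro H. replace v' with v by (apply functional_extensionality; auto). tauto. Qed.

Lemma eval_hom (A B : structure L) (h : A -> B) (v : nat -> A) t :
  homomorphism h -> h (eval A v t) = eval B (fun x => h (v x)) t.
Proof.
  intros [Hf Hr]. induction t as [x|f ts IH]; simpl; auto.
  rewrite Hf. f_equal. apply functional_extensionality. auto.
Qed.

Lemma upd_comp (A B : Type) (h : A -> B) (v : nat -> A) x a :
  (fun y => h (upd v x a y)) = upd (fun y => h (v y)) x (h a).
Proof.
  apply functional_extensionality; intro y; unfold upd. destruct (PeanoNat.Nat.eqb y x); auto.
Qed.

Fixpoint tbelow (n : nat) (t : term L) : Prop :=
  match t with
  | tvar x => x < n
  | tapp f ts => forall k, tbelow n (ts k)
  end.

Fixpoint fbelow (n : nat) (phi : formula L) : Prop :=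
  match phi with
  | fEq t u => tbelow n t /\ tbelow n u
  | fRel r ts => forall k, tbelow n (ts k)
  | fTrue | fFalse => True
  | fNot p => fbelow n p
  | fAnd p q | fOr p q | fImp p q => fbelow n p /\ fbelow n q
  | fEx _ _ | fAll _ _ => False
  end.

Lemma eval_below (M : structure L) (v v' : nat -> M) n t :
  tbelow n t -> (forall x, x < n -> v x = v' x) -> eval M v t = eval M v' t.
Proof.
  intros Hb H. induction t as [x|f ts IH]; simpl in *; auto.
  f_equal. apply functional_extensionality. intro k. apply IH; auto.
Qed.

Lemma sat_below (M : structure L) (v v' : nat -> M) n phi :
  fbelow n phi -> (forall x, x < n -> v x = v' x) -> (sat M v phi <-> sat M v' phi).
Proof.
  intros Hb H. induction phi; simpl in *.
  - rewrite (eval_below M v v' n t (proj1 Hb) H), (eval_below M v v' n t0 (proj2 Hb) H). tauto.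
  - replace (fun i => eval M v (t i)) with (fun i => eval M v' (t i)). tauto.
    apply functional_extensionality. intro k. symmetry. apply (eval_below M v v' n _ (Hb k) H).
  - tauto.
  - tauto.
  - rewrite IHphi; tauto.
  - rewrite IHphi1, IHphi2; tauto.
  - rewrite IHphi1, IHphi2; tauto.
  - rewrite IHphi1, IHphi2; tauto.
  - tauto.
  - tauto.
Qed.

Lemma tbelow_mono n m (t : term L) : n <= m -> tbelow n t -> tbelow m t.
Proof. intros Hnm. induction t; simpl; intros; auto. lia. Qed.

Lemma fbelow_mono n m (phi : formula L) : n <= m -> fbelow n phi -> fbelow m phi.
Proof.
  intros Hnm. induction phi; simpl; intro Hb; try tauto.
  - split; eapply tbelow_mono; eauto; tauto.
  - intro k; eapply tbelow_mono; eauto.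
Qed.

Fixpoint tren (rho : nat -> nat) (t : term L) : term L :=
  match t with
  | tvar x => tvar (rho x)
  | tapp f ts => tapp f (fun k => tren rho (ts k))
  end.

Fixpoint fren (rho : nat -> nat) (phi : formula L) : formula L :=
  match phi with
  | fEq t u => fEq (tren rho t) (tren rho u)
  | fRel r ts => fRel r (fun k => tren rho (ts k))
  | fTrue => fTrue
  | fFalse => fFalse
  | fNot p => fNot (fren rho p)
  | fAnd p q => fAnd (fren rho p) (fren rho q)
  | fOr p q => fOr (fren rho p) (fren rho q)
  | fImp p q => fImp (fren rho p) (fren rho q)
  | fEx x p => fEx x (fren rho p)
  | fAll x p => fAll x (fren rho p)
  end.

Lemma eval_ren (M : structure L) v rho t :
  eval M v (tren rho t) = eval M (fun x => v (rho x)) t.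
Proof.
  induction t; simpl; auto. f_equal. apply functional_extensionality; auto.
Qed.

Lemma sat_ren (M : structure L) v rho phi :
  pos_qf phi -> (sat M v (fren rho phi) <-> sat M (fun x => v (rho x)) phi).
Proof.
  induction phi; simpl; intros Hp; try tauto.
  - rewrite !eval_ren. tauto.
  - replace (fun i => eval M v (tren rho (t i))) with (fun i => eval M (fun x => v (rho x)) (t i)).
    tauto. apply functional_extensionality; intro; rewrite eval_ren; auto.
Qed.

Lemma pos_qf_ren rho (phi : formula L) : pos_qf phi -> pos_qf (fren rho phi).
Proof. induction phi; simpl; tauto. Qed.

Lemma tbelow_ren n m rho (t : term L) : (forall x, x < n -> rho x < m) -> tbelow n t -> tbelow m (tren rho t).
Proof. intro H; induction t; simpl; auto. Qed.

Lemma fbelow_ren n m rho (phi : formula L) : (forall x, x < n -> rho x < m) -> fbelow n phi -> fbelow m (fren rho phi).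
Proof.
  intro H; induction phi; simpl; intro Hb; try tauto.
  - split; eapply tbelow_ren; eauto; tauto.
  - intro k; eapply tbelow_ren; eauto.
Qed.

Fixpoint exs (n : nat) (phi : formula L) : formula L :=
  match n with
  | 0 => phi
  | S m => exs m (fEx m phi)
  end.

Lemma pos_qf_ex (phi : formula L) : pos_qf phi -> pos_ex phi.
Proof. destruct phi; simpl; tauto. Qed.

Lemma pos_ex_exs n (phi : formula L) : pos_ex phi -> pos_ex (exs n phi).
Proof. revert phi; induction n; simpl; intros; auto. Qed.

Lemma sat_exs (M : structure L) n : forall phi (v : nat -> M),
  sat M v (exs n phi) <-> exists u, (forall y, n <= y -> u y = v y) /\ sat M u phi.
Proof.
  induction n; simpl; intros phi v.
  - split.
    + intro H; exists v; split; auto.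
    + intros [u [Hu Hs]]. replace v with u; auto. apply functional_extensionality; intro; apply Hu; lia.
  - rewrite IHn. simpl. split.
    + intros [u [Hu [a Ha]]]. exists (upd u n a). split; auto.
      intros y Hy. unfold upd. destruct (PeanoNat.Nat.eqb_spec y n). lia. apply Hu; lia.
    + intros [u [Hu Hs]]. exists (upd u n (v n)). split.
      * intros y Hy. unfold upd. destruct (PeanoNat.Nat.eqb_spec y n); subst; auto. apply Hu; lia.
      * exists (u n). revert Hs. apply sat_ext. intro y. unfold upd.
        destruct (PeanoNat.Nat.eqb_spec y n); subst; auto.
Qed.

Fixpoint conj_upto (n : nat) (F : nat -> formula L) : formula L :=
  match n with
  | 0 => fTrue
  | S m => fAnd (conj_upto m F) (F m)
  end.

Lemma sat_conj (M : structure L) v n F :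
  sat M v (conj_upto n F) <-> forall j, j < n -> sat M v (F j).
Proof.
  induction n; simpl.
  - split; auto. intros; lia.
  - rewrite IHn. split.
    + intros [H1 H2] j Hj. destruct (PeanoNat.Nat.eq_dec j n); subst; auto. apply H1; lia.
    + intros H; split; auto.
Qed.

Lemma pos_conj n (F : nat -> formula L) : (forall j, pos_qf (F j)) -> pos_qf (conj_upto n F).
Proof. induction n; simpl; auto. Qed.

End Basics.


Record ultra (I : Type) := {
  uU :> (I -> Prop) -> Prop;
  uT : uU (fun _ => True);
  uI : forall X Y, uU X -> uU Y -> uU (fun t => X t /\ Y t);
  uS : forall X Y : I -> Prop, (forall t, X t -> Y t) -> uU X -> uU Y;
  uE : forall X, uU X -> exists t, X t;
  uC : forall X, uU X \/ uU (fun t => ~ X t)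
}.
Arguments uU {I}. Arguments uT {I}. Arguments uI {I}. Arguments uS {I}. Arguments uE {I}. Arguments uC {I}.

Section Ultra.
Context {L : language} (A : structure L) (I : Type) (U : ultra I).

Definition eqU (g g' : I -> A) : Prop := U (fun i => g i = g' i).

Lemma eqU_refl g : eqU g g.
Proof. unfold eqU. apply (uS U (fun _ => True)); auto. apply uT. Qed.
Lemma eqU_sym g g' : eqU g g' -> eqU g' g.
Proof. unfold eqU. apply uS. auto. Qed.
Lemma eqU_trans g1 g2 g3 : eqU g1 g2 -> eqU g2 g3 -> eqU g1 g3.
Proof. unfold eqU. intros H1 H2. eapply uS; [|apply (uI U _ _ H1 H2)]. simpl. intros t [-> ->]; auto. Qed.

Definition inhIA : inhabited (I -> A) :=
  match dom_inh A with inhabits a => inhabits (fun _ => a) end.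

Definition canon (g : I -> A) : I -> A := epsilon inhIA (fun g' => eqU g' g).

Lemma canon_spec g : eqU (canon g) g.
Proof. unfold canon. apply (epsilon_spec inhIA (fun g' => eqU g' g)). exists g. apply eqU_refl. Qed.

Lemma canon_eq g g' : eqU g g' -> canon g = canon g'.
Proof.
  intro H. unfold canon. f_equal. apply functional_extensionality. intro x.
  apply propositional_extensionality. split; intro.
  - eapply eqU_trans; eauto.
  - eapply eqU_trans; eauto. apply eqU_sym; auto.
Qed.

Definition UP : Type := { g : I -> A | canon g = g }.

Definition mk (g : I -> A) : UP := exist _ (canon g) (canon_eq _ _ (canon_spec g)).
Definition rep (c : UP) : I -> A := proj1_sig c.

Lemma UP_eq (c c' : UP) : rep c = rep c' -> c = c'.
Proof. destruct c, c'; simpl. unfold rep; simpl. intro; subst. f_equal. apply proof_irrelevance. Qed.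

Lemma mk_eq g g' : mk g = mk g' <-> eqU g g'.
Proof.
  split.
  - intro H. assert (canon g = canon g') by (apply (f_equal rep H)).
    eapply eqU_trans. apply eqU_sym, canon_spec. rewrite H0. apply canon_spec.
  - intro H. apply UP_eq. simpl. apply canon_eq; auto.
Qed.

Lemma rep_mk g : eqU (rep (mk g)) g.
Proof. apply canon_spec. Qed.

Lemma mk_rep c : mk (rep c) = c.
Proof. apply UP_eq. destruct c as [g e]. simpl. unfold rep; simpl. exact e. Qed.

Lemma fin_all : forall n (P : Fin.t n -> I -> Prop),
  (forall k, U (P k)) -> U (fun i => forall k, P k i).
Proof.
  induction n; intros P H.
  - apply (uS U (fun _ => True)); [|apply uT]. intros t _ k. apply (Fin.case0 (fun k => P k t) k).
  - pose proof (IHn (fun k => P (Fin.FS k)) (fun k => H (Fin.FS k))) as H1.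
    pose proof (uI U _ _ (H Fin.F1) H1) as H2.
    eapply uS; [|exact H2]. simpl. intros t [Ha Hb] k.
    apply (Fin.caseS' k (fun k => P k t)); auto.
Qed.

Definition UPstr : structure L := {|
  dom := UP;
  dom_inh := match dom_inh A with inhabits a => inhabits (mk (fun _ => a)) end;
  interp_f := fun f args => mk (fun i => interp_f A f (fun k => rep (args k) i));
  interp_r := fun r args => U (fun i => interp_r A r (fun k => rep (args k) i))
|}.

Lemma eval_los (uu : I -> nat -> A) (v : nat -> UPstr) t :
  (forall x, v x = mk (fun i => uu i x)) ->
  eval UPstr v t = mk (fun i => eval A (uu i) t).
Proof.
  intro Hv. induction t as [x|f ts IH]; simpl; auto.
  replace (fun i => eval UPstr v (ts i)) with (fun k => mk (fun i => eval A (uu i) (ts k)))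
    by (apply functional_extensionality; intro; rewrite IH; auto).
  apply mk_eq. unfold eqU.
  eapply uS; [|apply (fin_all _ (fun k i => rep (mk (fun i => eval A (uu i) (ts k))) i = eval A (uu i) (ts k)))].
  - simpl. intros t0 Ht. f_equal. apply functional_extensionality. intro k. rewrite IH; exact (Ht k).
  - intro k. apply rep_mk.
Qed.

Lemma upd_mk (uu : I -> nat -> A) (v : nat -> UPstr) x (g : I -> A) :
  (forall y, v y = mk (fun i => uu i y)) ->
  forall y, upd v x (mk g) y = mk (fun i => upd (uu i) x (g i) y).
Proof.
  intros Hv y. unfold upd. destruct (PeanoNat.Nat.eqb y x); auto.
Qed.

Lemma los (phi : formula L) : forall (uu : I -> nat -> A) (v : nat -> UPstr),
  (forall x, v x = mk (fun i => uu i x)) ->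
  (sat UPstr v phi <-> U (fun i => sat A (uu i) phi)).
Proof.
  induction phi; intros uu v Hv; simpl.
  - rewrite (eval_los uu v t Hv), (eval_los uu v t0 Hv). apply mk_eq.
  - pose proof (fin_all _ (fun k i => rep (mk (fun i => eval A (uu i) (t k))) i = eval A (uu i) (t k))
                  (fun k => rep_mk _)) as Hf.
    split; intro H.
    + eapply uS; [|apply (uI U _ _ H Hf)]. intros i [H1 H2].
      assert (E : (fun k => eval A (uu i) (t k)) = (fun k => rep (eval UPstr v (t k)) i))
        by (apply functional_extensionality; intro k; rewrite (eval_los uu v _ Hv); symmetry; apply H2).
      rewrite E. exact H1.
    + eapply uS; [|apply (uI U _ _ H Hf)]. intros i [H1 H2].
      assert (E : (fun k => eval A (uu i) (t k)) = (fun k => rep (eval UPstr v (t k)) i))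
        by (apply functional_extensionality; intro k; rewrite (eval_los uu v _ Hv); symmetry; apply H2).
      simpl. change (interp_r A r (fun k => rep (eval UPstr v (t k)) i)).
      rewrite <- E. exact H1.
  - split; auto. intros; apply uT.
  - split; [tauto|]. intro H. destruct (uE U _ H). auto.
  - rewrite (IHphi uu v Hv). split; intro H.
    + destruct (uC U (fun i => sat A (uu i) phi)); tauto.
    + intro H'. destruct (uE U _ (uI U _ _ H H')). tauto.
  - rewrite (IHphi1 uu v Hv), (IHphi2 uu v Hv). split.
    + intros [H1 H2]; apply uI; auto.
    + intro H; split; eapply uS; try exact H; simpl; tauto.
  - rewrite (IHphi1 uu v Hv), (IHphi2 uu v Hv). split.
    + intros [H|H]; eapply uS; try exact H; simpl; tauto.
    + intro H. destruct (uC U (fun i => sat A (uu i) phi1)) as [H1|H1]; [tauto|].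
      right. eapply uS; [|apply (uI U _ _ H H1)]. simpl. tauto.
  - rewrite (IHphi1 uu v Hv), (IHphi2 uu v Hv). split.
    + intro H. destruct (uC U (fun i => sat A (uu i) phi1)) as [H1|H1].
      * eapply uS; [|apply (H H1)]. simpl. tauto.
      * eapply uS; [|apply H1]. simpl. tauto.
    + intros H H1. eapply uS; [|apply (uI U _ _ H H1)]. simpl. tauto.
  - split.
    + intros [c Hc]. rewrite <- (mk_rep c) in Hc.
      rewrite (IHphi (fun i => upd (uu i) n (rep c i)) _ (upd_mk uu v n (rep c) Hv)) in Hc.
      eapply uS; [|exact Hc]. simpl. intros i Hi; eauto.
    + intro H. destruct (dom_inh A) as [a0].
      set (g := fun i => epsilon (inhabits a0) (fun a => sat A (upd (uu i) n a) phi)).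
      exists (mk g).
      rewrite (IHphi (fun i => upd (uu i) n (g i)) _ (upd_mk uu v n g Hv)).
      eapply uS; [|exact H]. simpl. intros i Hi. unfold g.
      apply (epsilon_spec (inhabits a0) (fun a => sat A (upd (uu i) n a) phi)). auto.
  - split.
    + intro H. destruct (uC U (fun i => forall a, sat A (upd (uu i) n a) phi)) as [H1|H1]; auto.
      exfalso. destruct (dom_inh A) as [a0].
      set (g := fun i => epsilon (inhabits a0) (fun a => ~ sat A (upd (uu i) n a) phi)).
      pose proof (H (mk g)) as H2.
      rewrite (IHphi (fun i => upd (uu i) n (g i)) _ (upd_mk uu v n g Hv)) in H2.
      destruct (uE U _ (uI U _ _ H1 H2)) as [i [Hi1 Hi2]].
      apply not_all_ex_not in Hi1.
      pose proof (epsilon_spec (inhabits a0) (fun a => ~ sat A (upd (uu i) n a) phi) Hi1). auto.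
    + intros H c. rewrite <- (mk_rep c).
      rewrite (IHphi (fun i => upd (uu i) n (rep c i)) _ (upd_mk uu v n (rep c) Hv)).
      eapply uS; [|exact H]. simpl. auto.
Qed.

Definition diag (a : A) : UPstr := mk (fun _ => a).

Lemma diag_elem phi (v : nat -> A) : sat A v phi <-> sat UPstr (fun x => diag (v x)) phi.
Proof.
  rewrite (los phi (fun _ => v)) by (intro; reflexivity). split.
  - intro H. apply (uS U (fun _ => True)); auto. apply uT.
  - intro H. destruct (uE U _ H); auto.
Qed.

Lemma UP_model (T : theory L) : is_model T A -> is_model T UPstr.
Proof.
  intros HA phi Hphi v.
  apply (los phi (fun i x => rep (v x) i)).
  - intro x. symmetry. apply mk_rep.
  - apply (uS U (fun _ => True)); [|apply uT]. intros; apply HA; auto.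
Qed.

End Ultra.


Section Key.
Context {L : language} (A B : structure L) (h : A -> B)
  (hom : homomorphism h) (imm : immersion h).

Lemma h_inj a1 a2 : h a1 = h a2 -> a1 = a2.
Proof.
  intro E.
  pose proof (imm (fEq (tvar 0) (tvar 1)) (fun x => if PeanoNat.Nat.eqb x 0 then a1 else a2) I) as H.
  simpl in H. apply H. exact E.
Qed.

Definition a0 : A := epsilon (dom_inh A) (fun _ => True).

Definition hinv (b : B) : A := epsilon (inhabits a0) (fun a => h a = b).

Definition inr (b : B) : Prop := exists a, h a = b.

Lemma hinv_spec b : inr b -> h (hinv b) = b.
Proof. intro H. apply (epsilon_spec (inhabits a0) (fun a => h a = b) H). Qed.

Lemma hinv_h a : hinv (h a) = a.
Proof. apply h_inj. apply hinv_spec. exists a; auto. Qed.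

Record fact := {
  fn : nat; fphi : formula L; fw : nat -> B;
  fpos : pos_qf fphi; fbel : fbelow fn fphi; fsat : sat B fw fphi }.

Definition Eform (n : nat) (w : nat -> B) : formula L :=
  conj_upto n (fun j => conj_upto n (fun k =>
    if excluded_middle_informative (w j = w k) then fEq (tvar j) (tvar k) else fTrue)).

Definition Pform (n : nat) (w : nat -> B) : formula L :=
  conj_upto n (fun j =>
    if excluded_middle_informative (inr (w j)) then fEq (tvar j) (tvar (n + j)) else fTrue).

Definition va (n : nat) (w : nat -> B) : nat -> A := fun y => hinv (w (y - n)).

Definition uprop (f : fact) (uA : nat -> A) : Prop :=
  (forall y, fn f <= y -> uA y = va (fn f) (fw f) y) /\
  sat A uA (fAnd (fphi f) (fAnd (Eform (fn f) (fw f)) (Pform (fn f) (fw f)))).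

Lemma uprop_ex f : exists uA, uprop f uA.
Proof.
  destruct f as [n phi w Hpos Hbel Hsat]. unfold uprop; simpl.
  set (psi := fAnd phi (fAnd (Eform n w) (Pform n w))).
  assert (Hp : pos_qf psi).
  { unfold psi, Eform, Pform. simpl. split; auto. split; apply pos_conj; intro j.
    - apply pos_conj. intro k. destruct (excluded_middle_informative _); simpl; auto.
    - destruct (excluded_middle_informative _); simpl; auto. }
  assert (HB : sat B (fun x => h (va n w x)) (exs n psi)).
  { apply sat_exs. exists (fun y => if y <? n then w y else h (va n w y)). split.
    - intros y Hy. destruct (Nat.ltb_spec y n); auto; lia.
    - assert (Hc : forall y, y < n -> (if y <? n then w y else h (va n w y)) = w y).
      { intros y Hy. destruct (Nat.ltb_spec y n); auto; lia. }
      unfold psi. simpl. split; [|split].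
      + apply (sat_below B _ w n phi Hbel Hc). auto.
      + unfold Eform. apply sat_conj. intros j Hj. apply sat_conj. intros k Hk.
        destruct (excluded_middle_informative _) as [e|e]; simpl; auto.
        rewrite (Hc j Hj), (Hc k Hk). auto.
      + unfold Pform. apply sat_conj. intros j Hj.
        destruct (excluded_middle_informative _) as [e|e]; simpl; auto.
        rewrite (Hc j Hj). destruct (Nat.ltb_spec (n + j) n); [lia|].
        unfold va. replace (n + j - n) with j by lia. symmetry. apply hinv_spec. auto. }
  pose proof (imm (exs n psi) (va n w) (pos_ex_exs n psi (pos_qf_ex psi Hp)) HB) as HA.
  apply sat_exs in HA. exact HA.
Qed.

Definition inhNA : inhabited (nat -> A) := inhabits (fun _ => a0).

Definition uA (f : fact) : nat -> A := epsilon inhNA (uprop f).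

Lemma uA_spec f : uprop f (uA f).
Proof. apply (epsilon_spec inhNA (uprop f) (uprop_ex f)). Qed.

Definition s (f : fact) (b : B) : A :=
  if excluded_middle_informative (inr b) then hinv b
  else epsilon (inhabits a0) (fun a => exists j, j < fn f /\ fw f j = b /\ uA f j = a).

Lemma s_h f a : s f (h a) = a.
Proof.
  unfold s. destruct (excluded_middle_informative _) as [e|e].
  - apply hinv_h.
  - exfalso. apply e. exists a; auto.
Qed.

Lemma s_sat f : sat A (fun y => s f (fw f y)) (fphi f).
Proof.
  destruct (uA_spec f) as [Hv [Hphi [HE HP]]].
  rewrite (sat_below A (fun y => s f (fw f y)) (uA f) (fn f) (fphi f) (fbel f)); [exact Hphi|].
  intros j Hj. unfold s. destruct (excluded_middle_informative _) as [e|e].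
  - unfold Pform in HP. apply sat_conj with (j := j) in HP; auto.
    destruct (excluded_middle_informative _) as [e'|e']; [|tauto].
    simpl in HP. rewrite HP. rewrite Hv by lia. unfold va. f_equal. f_equal. lia.
  - pose proof (epsilon_spec (inhabits a0) (fun a => exists j0, j0 < fn f /\ fw f j0 = fw f j /\ uA f j0 = a)) as Hs.
    destruct Hs as [j' [Hj' [Hw Hu]]]. { exists (uA f j), j. auto. }
    rewrite <- Hu. unfold Eform in HE.
    apply sat_conj with (j := j') in HE; auto. apply sat_conj with (j := j) in HE; auto.
    destruct (excluded_middle_informative _) as [e'|e']; [|tauto].
    simpl in HE. auto.
Qed.

Definition X (f : fact) (i : fact) : Prop := sat A (fun y => s i (fw f y)) (fphi f).

Definition Fbase (S : fact -> Prop) : Prop := exists f, forall i, X f i -> S i.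

Definition shiftw (n1 : nat) (w1 w2 : nat -> B) : nat -> B :=
  fun j => if j <? n1 then w1 j else w2 (j - n1).

Lemma combine f1 f2 : exists f3, forall i, X f3 i -> X f1 i /\ X f2 i.
Proof.
  destruct f1 as [n1 phi1 w1 p1 b1 s1], f2 as [n2 phi2 w2 p2 b2 s2].
  set (phi3 := fAnd phi1 (fren (fun y => n1 + y) phi2)).
  set (w3 := shiftw n1 w1 w2).
  assert (Hc1 : forall (M : structure L) (k : B -> M) j, j < n1 -> k (w3 j) = k (w1 j)).
  { intros M k j Hj. unfold w3, shiftw. destruct (Nat.ltb_spec j n1); auto; lia. }
  assert (Hc2 : forall (M : structure L) (k : B -> M) y, k (w3 (n1 + y)) = k (w2 y)).
  { intros M k y. unfold w3, shiftw. destruct (Nat.ltb_spec (n1 + y) n1); [lia|]. f_equal. f_equal. lia. }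
  assert (P3 : pos_qf phi3) by (simpl; split; auto; apply pos_qf_ren; auto).
  assert (B3 : fbelow (n1 + n2) phi3).
  { simpl. split. apply (fbelow_mono n1); auto; lia. apply (fbelow_ren n2); auto. intros; lia. }
  assert (S3 : sat B w3 phi3).
  { simpl. split.
    - rewrite (sat_below B w3 w1 n1 phi1 b1); auto. intros; apply (Hc1 B (fun b => b)); auto.
    - apply sat_ren; auto. apply (proj1 (sat_ext B w2 (fun x => w3 (n1 + x)) phi2 (fun y => eq_sym (Hc2 B (fun b => b) y)))). exact s2. }
  exists (Build_fact (n1 + n2) phi3 w3 P3 B3 S3). unfold X; simpl. intros i [H1 H2]. split.
  - rewrite <- (sat_below A (fun y => s i (w3 y)) (fun y => s i (w1 y)) n1 phi1 b1); [exact H1|].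
    intros; apply (Hc1 A (s i)); auto.
  - apply sat_ren in H2; auto. revert H2. apply sat_ext. intro. symmetry; apply (Hc2 A (s i)).
Qed.

Lemma exists_U : exists U : ultra fact, forall f, U (X f).
Proof.
  destruct (UF.ultra_exists fact Fbase) as [U [HF [HI [HS [HE HC]]]]].
  - destruct (dom_inh A) as [a].
    assert (Hs : sat B (fun _ => h a) (@fTrue L)) by exact I.
    exists (Build_fact 0 fTrue (fun _ => h a) I I Hs). auto.
  - intros X1 Y1 [f1 H1] [f2 H2]. destruct (combine f1 f2) as [f3 H3].
    exists f3. intros i Hi. destruct (H3 i Hi). auto.
  - intros X1 Y1 HXY [f Hf]. exists f. auto.
  - intros X1 [f Hf]. exists f. apply Hf. apply s_sat.
  - assert (HT : U (fun _ => True)).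
    { apply HF. destruct (dom_inh A) as [a].
      assert (Hs : sat B (fun _ => h a) (@fTrue L)) by exact I.
      exists (Build_fact 0 fTrue (fun _ => h a) I I Hs). auto. }
    exists (Build_ultra _ U HT HI HS HE HC). intro f. simpl. apply HF. exists f. auto.
Qed.

Definition mkw (m : nat) (args : Fin.t m -> B) (b0 : B) : nat -> B :=
  fun j => match lt_dec j m with left H => args (Fin.of_nat_lt H) | right _ => b0 end.

Lemma mkw_spec m args b0 (k : Fin.t m) : mkw m args b0 (proj1_sig (Fin.to_nat k)) = args k.
Proof.
  unfold mkw. destruct (lt_dec _ m) as [H|H].
  - rewrite (Fin.of_nat_ext H (proj2_sig (Fin.to_nat k))). rewrite Fin.of_nat_to_nat_inv. auto.
  - exfalso. apply H. apply proj2_sig.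
Qed.

Lemma mkw_m m args b0 : mkw m args b0 m = b0.
Proof. unfold mkw. destruct (lt_dec m m); auto. lia. Qed.

Definition vars (m : nat) : Fin.t m -> term L := fun k => tvar (proj1_sig (Fin.to_nat k)).

Lemma eval_vars (M : structure L) (k' : B -> M) m args b0 (k : Fin.t m) :
  eval M (fun y => k' (mkw m args b0 y)) (vars m k) = k' (args k).
Proof. simpl. rewrite mkw_spec. auto. Qed.

Lemma vars_below m (k : Fin.t m) : tbelow m (vars m k).
Proof. simpl. apply proj2_sig. Qed.

Lemma key : exists (C : structure L) (d : A -> C) (g : B -> C),
  (forall T, is_model T A -> is_model T C) /\ homomorphism g /\ (forall a, g (h a) = d a) /\ (forall phi v, sat A v phi <-> sat C (fun x => d (v x)) phi).
Proof.
  destruct exists_U as [U HU].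
  exists (UPstr A fact U), (diag A fact U), (fun b => mk A fact U (fun i => s i b)).
  split; [intros T HT; apply UP_model; auto|].
  split; [|split; [|intros; apply diag_elem]].
  2:{ intro a. unfold diag. f_equal. apply functional_extensionality. intro. apply s_h. }
  split.
  - intros f args. set (m := fari L f).
    set (w := mkw m args (interp_f B f args)).
    set (phiF := fEq (tvar m) (tapp f (vars m))).
    assert (Pp : pos_qf phiF) by exact I.
    assert (Pb : fbelow (S m) phiF).
    { simpl. split; [lia|]. intro k. pose proof (proj2_sig (Fin.to_nat k)). unfold m in *. simpl in *. lia. }
    assert (Ps : sat B w phiF).
    { simpl. unfold w at 1. rewrite mkw_m. f_equal. apply functional_extensionality. intro k.
      symmetry. apply (eval_vars B (fun b => b)). }
    pose proof (HU (Build_fact (S m) phiF w Pp Pb Ps)) as H1. unfold X in H1. simpl in H1.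
    apply mk_eq. unfold eqU.
    pose proof (fin_all fact U m (fun k i => rep A fact U (mk A fact U (fun i => s i (args k))) i = s i (args k))
                  (fun k => rep_mk _ _ _ _)) as H2.
    eapply uS; [|apply (uI U _ _ H1 H2)]. intros i [E1 E2].
    unfold w in E1. rewrite mkw_m in E1. rewrite E1. simpl. f_equal.
    apply functional_extensionality. intro k. rewrite mkw_spec. symmetry. exact (E2 k).
  - intros r args Hr. 
    set (w := mkw (rari L r) args (h a0)).
    set (phiR := fRel r (vars (rari L r))).
    assert (Pp : pos_qf phiR) by exact I.
    assert (Pb : fbelow (rari L r) phiR) by (intro k; apply vars_below).
    assert (Ps : sat B w phiR).
    { change (interp_r B r (fun i => eval B w (vars (rari L r) i))).
      enough (E : (fun i => eval B w (vars (rari L r) i)) = args) by (rewrite E; exact Hr).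
      apply functional_extensionality. intro k. apply (eval_vars B (fun b => b)). }
    pose proof (HU (Build_fact (rari L r) phiR w Pp Pb Ps)) as H1. unfold X in H1. simpl in H1.
    pose proof (fin_all fact U (rari L r) (fun k i => rep A fact U (mk A fact U (fun i => s i (args k))) i = s i (args k))
                  (fun k => rep_mk _ _ _ _)) as H2.
    simpl. eapply uS; [|apply (uI U _ _ H1 H2)]. intros i [E1 E2].
    assert (E : (fun k => s i (w (proj1_sig (Fin.to_nat k)))) = (fun k => rep A fact U (mk A fact U (fun i => s i (args k))) i)).
    { apply functional_extensionality. intro k. rewrite (E2 k). unfold w. rewrite mkw_spec. auto. }
    change (interp_r A r (fun k => rep A fact U (mk A fact U (fun i => s i (args k))) i)).
    rewrite <- E. exact E1.
Qed.

End Key.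

Lemma all_elem (L : language) (T : theory L) (Hpmc : pos_model_complete T) (phi : formula L) :
  forall (A B : structure L) (h : A -> B), is_model T A -> is_model T B -> homomorphism h ->
  forall v, sat A v phi <-> sat B (fun x => h (v x)) phi.
Proof.
  induction phi; intros A B h HA HB Hh v.
  - split; intro H.
    + simpl in *. rewrite <- !eval_hom by exact Hh. rewrite H. auto.
    + apply (Hpmc A B h HA HB Hh (fEq t t0) v I H).
  - split; intro H.
    + simpl in *. destruct Hh as [Hf Hr].
      replace (fun i => eval B (fun x => h (v x)) (t i)) with (fun i => h (eval A v (t i))).
      apply Hr; auto. apply functional_extensionality. intro; apply eval_hom; split; auto.
    + apply (Hpmc A B h HA HB Hh (fRel r t) v I H).
  - simpl; tauto.
  - simpl; tauto.
  - simpl. rewrite (IHphi A B h HA HB Hh v). tauto.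
  - simpl. rewrite (IHphi1 A B h HA HB Hh v), (IHphi2 A B h HA HB Hh v). tauto.
  - simpl. rewrite (IHphi1 A B h HA HB Hh v), (IHphi2 A B h HA HB Hh v). tauto.
  - simpl. rewrite (IHphi1 A B h HA HB Hh v), (IHphi2 A B h HA HB Hh v). tauto.
  - simpl. split.
    + intros [a Ha]. exists (h a). rewrite <- upd_comp. apply IHphi; auto.
    + intros [b Hb].
      destruct (key A B h (Hpmc A B h HA HB Hh)) as [C [d [g [HC [Hg [Hgh Hd]]]]]].
      apply (IHphi B C g HB (HC T HA) Hg) in Hb.
      rewrite upd_comp in Hb.
      replace (fun y => g (h (v y))) with (fun y => d (v y)) in Hb
        by (apply functional_extensionality; intro; rewrite Hgh; auto).
      assert (Hs : sat C (fun y => d (v y)) (fEx n phi)) by (exists (g b); exact Hb).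
      apply Hd in Hs. exact Hs.
  - simpl. split.
    + intros H b. apply NNPP. intro Hb.
      destruct (key A B h (Hpmc A B h HA HB Hh)) as [C [d [g [HC [Hg [Hgh Hd]]]]]].
      rewrite (IHphi B C g HB (HC T HA) Hg) in Hb.
      rewrite upd_comp in Hb.
      replace (fun y => g (h (v y))) with (fun y => d (v y)) in Hb
        by (apply functional_extensionality; intro; rewrite Hgh; auto).
      assert (Hs : sat A v (fAll n phi)) by exact H.
      rewrite (Hd (fAll n phi) v) in Hs. apply Hb. apply Hs.
    + intros H a. rewrite (IHphi A B h HA HB Hh). rewrite upd_comp. apply H.
Qed.

Theorem lemma4p5 (L : language) (T : theory L) :
  (forall phi, T phi -> sentence phi) ->
  pos_model_complete T ->
  forall (A B : structure L) (h : A -> B),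
    is_model T A -> is_model T B -> homomorphism h -> elementary h.
Proof.
  intros _ Hpmc A B h HA HB Hh phi v. apply (all_elem L T Hpmc phi A B h HA HB Hh).
Qed.
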